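(* Let $\mathcal{K}$ be a class of groups closed under homomorphic images, subgroups, and direct products of finitely many factors. If a group $G$ is conjugacy $\mathcal{K}$-separable, then for every finite normal subgroup $N$ of $G$ the quotient group $G/N$ is conjugacy $\mathcal{K}$-separable.
   Context: A group $G$ is conjugacy $\mathcal{K}$-separable if whenever $a,b\in G$ are not conjugate in $G$, there is a homomorphism $\varphi$ of $G$ onto a group $X\in\mathcal{K}$ such that $a\varphi$ and $b\varphi$ are not conjugate in $X$. *)

(* Defs.v *)
From Stdlib Require Import List ClassicalEpsilon FunctionalExtensionality
  PropExtensionality ProofIrrelevance.

Set Implicit Arguments.
Unset Strict Implicit.

Record group := Group {
  carrier :> Type;
  mul : carrier -> carrier -> carrier;
  one : carrier;
  inv : carrier -> carrier;
  mulA : forall x y z, mul x (mul y z) = mul (mul x y) z;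
  mul1g : forall x, mul one x = x;
  mulg1 : forall x, mul x one = x;
  mulVg : forall x, mul (inv x) x = one;
  mulgV : forall x, mul x (inv x) = one }.

Arguments mul {g}.
Arguments one {g}.
Arguments inv {g}.

Definition conjugate (G : group) (a b : G) : Prop :=
  exists g : G, b = mul (mul (inv g) a) g.

Definition is_hom (G H : group) (f : G -> H) : Prop :=
  forall x y : G, f (mul x y) = mul (f x) (f y).

Definition surjective (A B : Type) (f : A -> B) : Prop :=
  forall y : B, exists x : A, f x = y.

Definition group_class := group -> Prop.

Definition conj_sep (K : group_class) (G : group) : Prop :=
  forall a b : G, ~ conjugate a b ->
    exists (X : group) (phi : G -> X),
      K X /\ is_hom phi /\ surjective phi /\ ~ conjugate (phi a) (phi b).

Record subgroup_pred (G : group) (P : G -> Prop) : Prop := {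
  sg_one : P one;
  sg_mul : forall x y, P x -> P y -> P (mul x y);
  sg_inv : forall x, P x -> P (inv x) }.

Record normal_subgroup_pred (G : group) (N : G -> Prop) : Prop := {
  ns_sub : subgroup_pred N;
  ns_conj : forall g x, N x -> N (mul (mul (inv g) x) g) }.

Definition finite_pred (T : Type) (P : T -> Prop) : Prop :=
  exists l : list T, forall x, P x -> In x l.

Lemma sig_eqP (T : Type) (P : T -> Prop) (u v : {x : T | P x}) :
  proj1_sig u = proj1_sig v -> u = v.
Proof.
destruct u as [x px], v as [y py]; simpl; intros ->.
f_equal; apply proof_irrelevance.
Qed.

Section SubGroup.
Variables (G : group) (P : G -> Prop) (HP : subgroup_pred P).

Definition sub_mul (x y : {x : G | P x}) : {x : G | P x} :=
  exist _ (mul (proj1_sig x) (proj1_sig y))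
    (sg_mul HP (proj2_sig x) (proj2_sig y)).
Definition sub_one : {x : G | P x} := exist _ one (sg_one HP).
Definition sub_inv (x : {x : G | P x}) : {x : G | P x} :=
  exist _ (inv (proj1_sig x)) (sg_inv HP (proj2_sig x)).

Definition subgroup_of : group.
Proof.
refine (@Group {x : G | P x} sub_mul sub_one sub_inv _ _ _ _ _);
  intros; apply sig_eqP; simpl.
- apply mulA.
- apply mul1g.
- apply mulg1.
- apply mulVg.
- apply mulgV.
Defined.
End SubGroup.

Section Product.
Variables (n : nat) (F : {i : nat | i < n} -> group).

Definition prod_carrier := forall i, F i.
Definition prod_mul (x y : prod_carrier) : prod_carrier := fun i => mul (x i) (y i).
Definition prod_one : prod_carrier := fun i => one.
Definition prod_inv (x : prod_carrier) : prod_carrier := fun i => inv (x i).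

Definition prod_group : group.
Proof.
refine (@Group prod_carrier prod_mul prod_one prod_inv _ _ _ _ _);
  intros; apply functional_extensionality_dep; intro i; unfold prod_mul, prod_one, prod_inv.
- apply mulA.
- apply mul1g.
- apply mulg1.
- apply mulVg.
- apply mulgV.
Defined.
End Product.

Definition closed_hom_images (K : group_class) : Prop :=
  forall (X Y : group) (f : X -> Y), is_hom f -> surjective f -> K X -> K Y.

Definition closed_subgroups (K : group_class) : Prop :=
  forall (X : group) (P : X -> Prop) (HP : subgroup_pred P),
    K X -> K (subgroup_of HP).

Definition closed_fin_products (K : group_class) : Prop :=
  forall (n : nat) (F : {i : nat | i < n} -> group),
    (forall i, K (F i)) -> K (prod_group F).

(** * Quotient group G/N (elements are the left cosets aN, as subsets of G) *)
Section GroupLemmas.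
Variable G : group.

Lemma inv_uniq (x y : G) : mul x y = one -> y = inv x.
Proof.
intro h. rewrite <- (mul1g y), <- (mulVg x), <- mulA, h, mulg1. reflexivity.
Qed.

Lemma invK (x : G) : inv (inv x) = x.
Proof. symmetry; apply inv_uniq, mulVg. Qed.

Lemma invM (x y : G) : inv (mul x y) = mul (inv y) (inv x).
Proof.
symmetry; apply inv_uniq.
rewrite <- mulA, (mulA y), mulgV, mul1g, mulgV; reflexivity.
Qed.
End GroupLemmas.

Section Quotient.
Variables (G : group) (N : G -> Prop) (HN : normal_subgroup_pred N).

Definition qcarrier :=
  {C : G -> Prop | exists a : G, C = fun x => N (mul (inv a) x)}.

Definition coset (a : G) : qcarrier :=
  exist _ (fun x => N (mul (inv a) x)) (ex_intro _ a eq_refl).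

Definition rep (C : qcarrier) : G :=
  proj1_sig (constructive_indefinite_description _ (proj2_sig C)).

Lemma rep_spec (C : qcarrier) : coset (rep C) = C.
Proof.
unfold rep; destruct (constructive_indefinite_description _ _) as [a ha].
apply sig_eqP; simpl; symmetry; exact ha.
Qed.

Lemma coset_surj (C : qcarrier) : exists a, C = coset a.
Proof. exists (rep C); symmetry; apply rep_spec. Qed.

Let NS := ns_sub HN.

Lemma coset_eqE (a b : G) : coset a = coset b -> N (mul (inv a) b).
Proof.
intro h. apply (f_equal (@proj1_sig _ _)) in h; simpl in h.
assert (e := f_equal (fun f => f b) h); simpl in e.
rewrite e, mulVg; apply (sg_one NS).
Qed.

Lemma coset_eqI (a b : G) : N (mul (inv a) b) -> coset a = coset b.
Proof.
intro h. apply sig_eqP; simpl.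
apply functional_extensionality; intro x; apply propositional_extensionality.
split; intro hx.
- replace (mul (inv b) x) with (mul (inv (mul (inv a) b)) (mul (inv a) x)).
  + apply (sg_mul NS); [apply (sg_inv NS) |]; assumption.
  + rewrite invM, invK, <- mulA, (mulA a), mulgV, mul1g; reflexivity.
- replace (mul (inv a) x) with (mul (mul (inv a) b) (mul (inv b) x)).
  + apply (sg_mul NS); assumption.
  + rewrite <- mulA, (mulA b), mulgV, mul1g; reflexivity.
Qed.

Lemma rep_coset (a : G) : N (mul (inv (rep (coset a))) a).
Proof. apply coset_eqE; apply rep_spec. Qed.

Definition qmul (C D : qcarrier) : qcarrier := coset (mul (rep C) (rep D)).
Definition qone : qcarrier := coset one.
Definition qinv (C : qcarrier) : qcarrier := coset (inv (rep C)).

Lemma qmulE (a b : G) : qmul (coset a) (coset b) = coset (mul a b).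
Proof.
unfold qmul. apply coset_eqI.
set (a' := rep (coset a)). set (b' := rep (coset b)).
assert (h1 : N (mul (inv a') a)) by apply rep_coset.
assert (h2 : N (mul (inv b') b)) by apply rep_coset.
replace (mul (inv (mul a' b')) (mul a b)) with
  (mul (mul (mul (inv b') (mul (inv a') a)) b') (mul (inv b') b)).
- apply (sg_mul NS); [apply (ns_conj HN) |]; assumption.
- rewrite invM. rewrite <- !mulA. f_equal. f_equal. f_equal.
  rewrite (mulA b'), mulgV, mul1g; reflexivity.
Qed.

Lemma qinvE (a : G) : qinv (coset a) = coset (inv a).
Proof.
unfold qinv. apply coset_eqI.
set (a' := rep (coset a)).
assert (h1 : N (mul (inv a') a)) by apply rep_coset.
rewrite invK.
replace (mul a' (inv a)) with
  (mul (mul (inv (inv a')) (inv (mul (inv a') a))) (inv a')).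
- apply (ns_conj HN), (sg_inv NS); assumption.
- rewrite invK, invM, invK. rewrite <- !mulA, mulgV, mulg1; reflexivity.
Qed.

Definition quotient : group.
Proof.
refine (@Group qcarrier qmul qone qinv _ _ _ _ _).
- intros x y z.
  destruct (coset_surj x) as [a ->]; destruct (coset_surj y) as [b ->];
  destruct (coset_surj z) as [c ->].
  rewrite !qmulE, mulA; reflexivity.
- intros x; destruct (coset_surj x) as [a ->]; unfold qone.
  rewrite qmulE, mul1g; reflexivity.
- intros x; destruct (coset_surj x) as [a ->]; unfold qone.
  rewrite qmulE, mulg1; reflexivity.
- intros x; destruct (coset_surj x) as [a ->]; unfold qone.
  rewrite qinvE, qmulE, mulVg; reflexivity.
- intros x; destruct (coset_surj x) as [a ->]; unfold qone.
  rewrite qinvE, qmulE, mulgV; reflexivity.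
Defined.
End Quotient.

(* Main.v *)
Require Import Defs.
From Stdlib Require Import List ClassicalEpsilon FunctionalExtensionality
  PropExtensionality ProofIrrelevance Classical.

Lemma hom_one (G H : group) (f : G -> H) : is_hom f -> f one = one.
Proof.
intro hf. assert (e : mul (f one) (f one) = mul (f one) one).
{ rewrite <- hf, mul1g, mulg1; reflexivity. }
rewrite <- (mul1g (f one)), <- (mulVg (f one)), <- mulA, e, mulA, mulVg, mul1g.
reflexivity.
Qed.

Lemma hom_inv (G H : group) (f : G -> H) : is_hom f -> forall x, f (inv x) = inv (f x).
Proof.
intros hf x. apply inv_uniq. rewrite <- hf, mulgV. apply hom_one; exact hf.
Qed.

Theorem proposition2 (K : group_class)
  (HKhom : closed_hom_images K)
  (HKsub : closed_subgroups K)
  (HKprod : closed_fin_products K)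
  (G : group) (HG : conj_sep K G)
  (N : G -> Prop) (HN : normal_subgroup_pred N) (HNfin : finite_pred N) :
  conj_sep K (quotient HN).
Proof.
intros A B hAB.
destruct HNfin as [l hl].
set (k := length l).
set (m := fun i : {i : nat | i < k} =>
  if excluded_middle_informative (N (nth (proj1_sig i) l one))
  then nth (proj1_sig i) l one else one).
assert (hmN : forall i, N (m i)).
{ intro i. unfold m. destruct excluded_middle_informative; auto.
  apply (sg_one (ns_sub HN)). }
assert (hmS : forall n, N n -> exists i, m i = n).
{ intros n hn. destruct (In_nth l n one (hl n hn)) as [j [hj ej]].
  exists (exist _ j hj). unfold m; simpl. rewrite ej.
  destruct excluded_middle_informative; tauto. }
set (a := rep A). set (b := rep B).
assert (eA : A = coset N a) by (symmetry; apply rep_spec).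
assert (eB : B = coset N b) by (symmetry; apply rep_spec).
assert (Hnc : forall i, ~ conjugate a (mul b (m i))).
{ intros i [h eh]. apply hAB. exists (coset N h).
  rewrite eA, eB.
  change (coset N b = @qmul _ N (@qmul _ N (@qinv _ N (coset N h)) (coset N a)) (coset N h)).
  rewrite (qinvE HN), !(qmulE HN), <- eh. apply (coset_eqI HN).
  rewrite mulA, mulVg, mul1g. apply hmN. }
assert (Hs : forall i, exists (X : group) (phi : G -> X),
  K X /\ is_hom phi /\ surjective phi /\ ~ conjugate (phi a) (phi (mul b (m i)))).
{ intro i. apply HG, Hnc. }
set (Hs' := fun i => let (X, h) := constructive_indefinite_description _ (Hs i) in
   existT (fun X : group => {phi : G -> X | K X /\ is_hom phi /\ surjective phi /\
     ~ conjugate (phi a) (phi (mul b (m i)))}) X (constructive_indefinite_description _ h)).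
set (F := fun i => projT1 (Hs' i)).
set (phi := fun i => proj1_sig (projT2 (Hs' i)) : G -> F i).
assert (hphi : forall i, K (F i) /\ is_hom (phi i) /\ surjective (phi i) /\
     ~ conjugate (phi i a) (phi i (mul b (m i)))).
{ intro i. exact (proj2_sig (projT2 (Hs' i))). }
clearbody phi F. clear Hs' Hs.
set (Pr := prod_group F).
set (ph := (fun g i => phi i g) : G -> Pr).
assert (hph : is_hom ph).
{ intros x y. apply functional_extensionality_dep; intro i.
  unfold ph. simpl. unfold prod_mul. apply (proj1 (proj2 (hphi i))). }
set (P := fun y : Pr => exists g, ph g = y).
assert (HP : subgroup_pred P).
{ split.
  - exists one. apply hom_one, hph.
  - intros x y [g1 <-] [g2 <-]. exists (mul g1 g2). apply hph.
  - intros x [g <-]. exists (inv g). apply hom_inv, hph. }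
set (S := subgroup_of HP).
set (sph := fun g => (exist P (ph g) (ex_intro _ g eq_refl) : S)).
assert (hsph : is_hom sph).
{ intros x y. apply sig_eqP. simpl. apply hph. }
set (M := fun s : S => exists n, N n /\ ph n = proj1_sig s).
assert (HM : normal_subgroup_pred M).
{ split; [split|].
  - exists one. split; [apply (sg_one (ns_sub HN))| apply hom_one, hph].
  - intros x y [n1 [h1 e1]] [n2 [h2 e2]]. exists (mul n1 n2).
    split; [apply (sg_mul (ns_sub HN)); auto|]. simpl. rewrite hph, e1, e2; reflexivity.
  - intros x [n1 [h1 e1]]. exists (inv n1).
    split; [apply (sg_inv (ns_sub HN)); auto|]. simpl. rewrite hom_inv, e1; auto.
  - intros g x [n1 [h1 e1]]. destruct g as [y [g0 eg]]. exists (mul (mul (inv g0) n1) g0).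
    split; [apply (ns_conj HN); auto|]. simpl. rewrite !hph, hom_inv, e1, eg; auto. }
set (Q := quotient HM).
assert (KQ : K Q).
{ apply (HKhom S Q (coset M)).
  - intros x y. symmetry. apply (qmulE HM).
  - intros y. destruct (coset_surj y) as [x ->]. eauto.
  - apply HKsub, HKprod. intro i; apply hphi. }
set (psi := fun C : quotient HN => (coset M (sph (rep C)) : Q)).
assert (hwd : forall g, psi (coset N g) = coset M (sph g)).
{ intro g. unfold psi. apply (coset_eqI HM).
  assert (hn := rep_coset HN g). exists (mul (inv (rep (coset N g))) g).
  split; auto. simpl. rewrite hph, hom_inv; auto. }
exists Q, psi. split; [exact KQ|]. split; [|split].
- intros x y. destruct (coset_surj x) as [x' ->]. destruct (coset_surj y) as [y' ->].
  change (psi (@qmul _ N (coset N x') (coset N y')) =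
    @qmul _ M (psi (coset N x')) (psi (coset N y'))).
  rewrite (qmulE HN), !hwd, (qmulE HM), hsph. reflexivity.
- intro y. destruct (coset_surj y) as [s ->]. destruct s as [z [g eg]].
  exists (coset N g). rewrite hwd. f_equal. apply sig_eqP. simpl. exact eg.
- intros [q eq]. destruct (coset_surj q) as [s ->].
  assert (es : exists g, s = sph g).
  { destruct s as [z [g eg]]. exists g. apply sig_eqP; simpl; auto. }
  destruct es as [g ->]. rewrite eA, eB, !hwd in eq.
  change (coset M (sph b) = @qmul _ M (@qmul _ M (@qinv _ M (coset M (sph g)))
     (coset M (sph a))) (coset M (sph g))) in eq.
  rewrite (qinvE HM), !(qmulE HM) in eq.
  rewrite <- hom_inv, <- !hsph in eq by exact hsph.
  apply (coset_eqE HM) in eq. destruct eq as [n [hn en]].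
  assert (en2 : ph n = ph (mul (inv b) (mul (mul (inv g) a) g))) by (rewrite en, hph, (@hom_inv _ _ _ hph); reflexivity). clear en. rename en2 into en.
  destruct (hmS n hn) as [i ei].
  apply (f_equal (fun f => f i)) in en. unfold ph in en.
  destruct (hphi i) as [_ [hi [_ nci]]]. apply nci.
  exists (phi i g). rewrite ei, hi, en, <- hi, mulA, mulgV, mul1g, <- !hom_inv, <- !hi by exact hi.
  reflexivity.
Qed.
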